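(* Let $\alpha\ge-1$ and $A\subseteq\mathbb{N}$. Then the set of all cluster points of the sequence $\left(\frac{A_\alpha(n)}{\mathbb{N}_\alpha(n)}\right)_{n\ge1}$ is the whole interval $[\underline{d}_\alpha(A),\overline{d}_\alpha(A)]$.
   Context: $\mathbb{N}=\{1,2,3,\dots\}$. For $\alpha\ge-1$ and $A\subseteq\mathbb{N}$ put $A_\alpha(n)=\sum_{k=1}^n\chi_A(k)k^\alpha$ (so $\mathbb{N}_\alpha(n)=\sum_{k=1}^nk^\alpha$), $\underline{d}_\alpha(A)=\liminf_{n\to\infty}\frac{A_\alpha(n)}{\mathbb{N}_\alpha(n)}$ and $\overline{d}_\alpha(A)=\limsup_{n\to\infty}\frac{A_\alpha(n)}{\mathbb{N}_\alpha(n)}$. *)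

(* Defs.v *)
From Stdlib Require Import Reals.
From Coquelicot Require Import Coquelicot.
Open Scope R_scope.

(* A subset A of N = {1,2,...} is given by its characteristic function
   A : nat -> bool (only values at k >= 1 matter). *)

Fixpoint Asum (A : nat -> bool) (alpha : R) (n : nat) : R :=
  match n with
  | O => 0
  | S m => Asum A alpha m + (if A (S m) then Rpower (INR (S m)) alpha else 0)
  end.

Definition Nsum (alpha : R) (n : nat) : R := Asum (fun _ => true) alpha n.

Definition dratio (A : nat -> bool) (alpha : R) (n : nat) : R :=
  Asum A alpha n / Nsum alpha n.

(* lower / upper alpha-densities: liminf / limsup over n >= 1
   (the sequence is reindexed n |-> n+1 so that it starts at n = 1) *)
Definition lower_d (alpha : R) (A : nat -> bool) : Rbar :=
  LimInf_seq (fun n => dratio A alpha (S n)).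
Definition upper_d (alpha : R) (A : nat -> bool) : Rbar :=
  LimSup_seq (fun n => dratio A alpha (S n)).

Definition cluster_point (u : nat -> R) (x : R) : Prop :=
  forall eps : R, 0 < eps -> forall N : nat, exists n : nat, (N <= n)%nat /\ Rabs (u n - x) < eps.

(* Main.v *)
Require Import Defs.
From Stdlib Require Import Reals Lra Lia Psatz.
From Coquelicot Require Import Coquelicot.
Open Scope R_scope.

Lemma exp_le_mono x y : x <= y -> exp x <= exp y.
Proof. intros [H|H]. left; apply exp_increasing; auto. subst; lra. Qed.

Lemma Rpow_pos x a : 0 < Rpower x a.
Proof. unfold Rpower; apply exp_pos. Qed.

Lemma Asum_nonneg A a n : 0 <= Asum A a n.
Proof.
  induction n; cbn [Asum]. lra.
  destruct (A (S n)); pose proof (Rpow_pos (INR (S n)) a); lra.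
Qed.

Lemma Asum_le A a n : Asum A a n <= Nsum a n.
Proof.
  unfold Nsum; induction n; cbn [Asum]. lra.
  destruct (A (S n)); pose proof (Rpow_pos (INR (S n)) a); lra.
Qed.

Lemma Nsum_pos a n : 0 < Nsum a (S n).
Proof.
  unfold Nsum; cbn [Asum]. pose proof (Asum_nonneg (fun _ => true) a n).
  pose proof (Rpow_pos (INR (S n)) a); lra.
Qed.

Lemma Nsum_S a n : Nsum a (S n) = Nsum a n + Rpower (INR (S n)) a.
Proof. reflexivity. Qed.

Lemma u_bounds A a n : 0 <= dratio A a (S n) <= 1.
Proof.
  unfold dratio. pose proof (Nsum_pos a n). pose proof (Asum_nonneg A a (S n)).
  pose proof (Asum_le A a (S n)). split.
  apply Rmult_le_pos; [lra | left; apply Rinv_0_lt_compat; lra].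
  apply (Rmult_le_reg_r (Nsum a (S n))); auto. unfold Rdiv.
  rewrite Rmult_assoc, Rinv_l by lra. lra.
Qed.

Lemma incr_bound A a n :
  Rabs (dratio A a (S (S n)) - dratio A a (S n)) <=
  Rpower (INR (S (S n))) a / Nsum a (S (S n)).
Proof.
  unfold dratio. rewrite Nsum_S.
  change (Asum A a (S (S n))) with
    (Asum A a (S n) + (if A (S (S n)) then Rpower (INR (S (S n))) a else 0)).
  pose proof (Nsum_pos a n). pose proof (Asum_nonneg A a (S n)).
  pose proof (Asum_le A a (S n)). pose proof (Rpow_pos (INR (S (S n))) a).
  set (P := Asum A a (S n)) in *. set (Q := Nsum a (S n)) in *.
  set (b := Rpower (INR (S (S n))) a) in *.
  assert (Hi : 0 < / (Q * (Q + b))) by (apply Rinv_0_lt_compat; nra).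
  set (i := / (Q * (Q + b))) in *.
  assert (E2 : b / (Q + b) = Q * b * i) by (unfold i; field; lra).
  rewrite E2. apply Rabs_le.
  assert (Hbi : 0 < b * i) by (apply Rmult_lt_0_compat; auto).
  assert (HP1 : 0 <= P * (b * i)) by (apply Rmult_le_pos; lra).
  assert (HP2 : 0 <= (Q - P) * (b * i)) by (apply Rmult_le_pos; lra).
  destruct (A (S (S n))).
  - assert (E : (P + b) / (Q + b) - P / Q = (Q - P) * b * i) by (unfold i; field; lra).
    rewrite E. rewrite !Rmult_assoc. split; nra.
  - assert (E : (P + 0) / (Q + b) - P / Q = - P * b * i) by (unfold i; field; lra).
    rewrite E. rewrite !Rmult_assoc. split; nra.
Qed.

Lemma sum_neg a M j : a <= 0 -> (j <= M)%nat -> INR j * Rpower (INR M) a <= Nsum a j.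
Proof.
  intros Ha. induction j; intros Hj.
  - simpl. unfold Nsum; simpl; lra.
  - specialize (IHj ltac:(lia)).
    assert (Rpower (INR M) a <= Rpower (INR (S j)) a).
    { unfold Rpower. apply exp_le_mono. apply Rmult_le_compat_neg_l; auto.
      apply ln_le. apply lt_0_INR; lia. apply le_INR; lia. }
    rewrite Nsum_S. set (r := Rpower (INR (S j)) a) in *.
    rewrite S_INR, Rmult_plus_distr_r. lra.
Qed.

Lemma sum_pos a m j : 0 <= a -> (1 <= m)%nat ->
  Nsum a m + INR j * Rpower (INR m) a <= Nsum a (m + j).
Proof.
  intros Ha Hm. induction j.
  - simpl. rewrite Nat.add_0_r; lra.
  - assert (Rpower (INR m) a <= Rpower (INR (S (m + j))) a).
    { apply Rle_Rpower_l; auto. split. apply lt_0_INR; lia. apply le_INR; lia. }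
    rewrite Nat.add_succ_r, Nsum_S. set (r := Rpower (INR (S (m + j))) a) in *.
    rewrite S_INR, Rmult_plus_distr_r. lra.
Qed.

Lemma div_helper b N q K : 0 < N -> 0 < q -> b * q <= K * N -> b / N <= K / q.
Proof.
  intros HN Hq H.
  replace (b / N) with (b * q * / (N * q)) by (field; lra).
  replace (K / q) with (K * N * / (N * q)) by (field; lra).
  apply Rmult_le_compat_r; auto. left; apply Rinv_0_lt_compat; nra.
Qed.

Lemma ratio_bound a : exists K, 0 < K /\ forall m,
  Rpower (INR (S (S m))) a / Nsum a (S (S m)) <= K / INR (S (m / 2)).
Proof.
  destruct (Rle_dec a 0) as [Ha|Ha].
  - exists 1. split. lra. intros m.
    pose proof (Rpow_pos (INR (S (S m))) a).
    pose proof (sum_neg a (S (S m)) (S (S m)) Ha (le_n _)).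
    apply div_helper. apply Nsum_pos. apply lt_0_INR; lia.
    assert (INR (S (m/2)) <= INR (S (S m))).
    { apply le_INR. pose proof (Nat.div_le_upper_bound m 2 m). 
      assert (m / 2 <= m)%nat by (apply Nat.div_le_upper_bound; lia). lia. }
    nra.
  - assert (Ha' : 0 <= a) by lra.
    exists (Rpower 4 a). split. apply Rpow_pos. intros m.
    set (q := S (m / 2)).
    assert (Hdm : (m = 2 * (m / 2) + m mod 2)%nat) by (apply Nat.div_mod; lia).
    assert (Hmu : (m mod 2 < 2)%nat) by (apply Nat.mod_upper_bound; lia).
    assert (Hq : (q + q <= S (S m) <= 4 * q)%nat) by (unfold q; lia).
    assert (Hq1 : (1 <= q)%nat) by (unfold q; lia).
    assert (HqR : 0 < INR q) by (apply lt_0_INR; lia).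
    pose proof (Rpow_pos (INR q) a).
    assert (HN : INR q * Rpower (INR q) a <= Nsum a (S (S m))).
    { pose proof (sum_pos a q q Ha' Hq1).
      pose proof (sum_pos a (q + q) (S (S m) - (q + q)) Ha' ltac:(lia)).
      replace (q + q + (S (S m) - (q + q)))%nat with (S (S m)) in H1 by lia.
      pose proof (Rpow_pos (INR (q+q)) a).
      assert (0 <= INR (S (S m) - (q + q))) by apply pos_INR.
      assert (0 <= Nsum a q).
      { destruct q. lia. left; apply Nsum_pos. }
      nra. }
    assert (Hb : Rpower (INR (S (S m))) a <= Rpower 4 a * Rpower (INR q) a).
    { rewrite Rpower_mult_distr by lra. apply Rle_Rpower_l; auto.
      split. apply lt_0_INR; lia.
      replace 4 with (INR 4) by (simpl; lra). rewrite <- mult_INR.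
      apply le_INR; lia. }
    apply div_helper. apply Nsum_pos. auto.
    pose proof (Rpow_pos 4 a). nra.
Qed.

Lemma incr_to0 A a : forall eps, 0 < eps -> exists N, forall n, (N <= n)%nat ->
  Rabs (dratio A a (S (S n)) - dratio A a (S n)) < eps.
Proof.
  intros eps He. destruct (ratio_bound a) as [K [HK HB]].
  destruct (INR_unbounded (K / eps)) as [q0 Hq0].
  exists (2 * q0)%nat. intros n Hn.
  eapply Rle_lt_trans. apply incr_bound.
  eapply Rle_lt_trans. apply HB.
  assert (Hq : (q0 <= n / 2)%nat).
  { apply Nat.div_le_lower_bound; lia. }
  assert (INR q0 < INR (S (n / 2))) by (apply lt_INR; lia).
  assert (0 < INR (S (n/2))) by (apply lt_0_INR; lia).
  apply (Rmult_lt_reg_r (INR (S (n/2)) / eps)).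
  apply Rdiv_lt_0_compat; lra.
  replace (K / INR (S (n / 2)) * (INR (S (n / 2)) / eps)) with (K / eps) by (field; lra).
  replace (eps * (INR (S (n / 2)) / eps)) with (INR (S (n / 2))) by (field; lra).
  lra.
Qed.

Lemma crossing (u : nat -> R) x n0 : u n0 <= x -> forall k, x < u (n0 + k)%nat ->
  exists n, (n0 <= n)%nat /\ u n <= x /\ x < u (S n).
Proof.
  intros H0 k. induction k; intros Hk.
  - rewrite Nat.add_0_r in Hk; lra.
  - destruct (Rle_dec (u (n0 + k)%nat) x).
    + exists (n0 + k)%nat. split. lia. split. auto.
      rewrite <- Nat.add_succ_r; auto.
    + apply IHk. lra.
Qed.

Theorem lemma4p1 (alpha : R) (A : nat -> bool) (halpha : -1 <= alpha) :
  forall x : R,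
    cluster_point (fun n => dratio A alpha (S n)) x <->
    (Rbar_le (lower_d alpha A) (Finite x) /\ Rbar_le (Finite x) (upper_d alpha A)).
Proof.
  intros x. unfold lower_d, upper_d.
  set (u := fun n => dratio A alpha (S n)).
  assert (Hb : forall n, 0 <= u n <= 1) by (intros; apply u_bounds).
  destruct (ex_LimInf_seq u) as [l Hl]. rewrite (is_LimInf_seq_unique _ _ Hl).
  destruct (ex_LimSup_seq u) as [L HL]. rewrite (is_LimSup_seq_unique _ _ HL).
  destruct l as [l| |].
  2: { destruct (Hl 1) as [N HN]. specialize (HN N (le_n _)). specialize (Hb N). lra. }
  2: { destruct (Hl 0 O) as [n [_ Hn]]. specialize (Hb n). lra. }
  destruct L as [L| |].
  2: { destruct (HL 1 O) as [n [_ Hn]]. specialize (Hb n). lra. }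
  2: { destruct (HL 0) as [N HN]. specialize (HN N (le_n _)). specialize (Hb N). lra. }
  simpl. split.
  - intros Hc. split.
    + destruct (Rle_dec l x) as [?|Hn]; auto. exfalso.
      assert (He : 0 < (l - x) / 2) by lra.
      destruct (Hl (mkposreal _ He)) as [_ [N HN]].
      destruct (Hc _ He N) as [n [Hn1 Hn2]]. specialize (HN n Hn1). simpl in HN.
      apply Rabs_def2 in Hn2. unfold u in *. lra.
    + destruct (Rle_dec x L) as [?|Hn]; auto. exfalso.
      assert (He : 0 < (x - L) / 2) by lra.
      destruct (HL (mkposreal _ He)) as [_ [N HN]].
      destruct (Hc _ He N) as [n [Hn1 Hn2]]. specialize (HN n Hn1). simpl in HN.
      apply Rabs_def2 in Hn2. unfold u in *. lra.
  - intros [H1 H2] eps He N.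
    destruct (incr_to0 A alpha eps He) as [N1 HN1].
    destruct (Hl (mkposreal _ He)) as [Hl1 _].
    destruct (HL (mkposreal _ He)) as [HL1 _].
    destruct (Hl1 (Nat.max N N1)) as [n0 [Hn0 Hu0]]. simpl in Hu0.
    destruct (HL1 n0) as [n1 [Hn1 Hu1]]. simpl in Hu1.
    destruct (Rlt_dec (Rabs (u n0 - x)) eps) as [Hc|Hc].
    { exists n0. split. lia. auto. }
    destruct (Rlt_dec (Rabs (u n1 - x)) eps) as [Hc'|Hc'].
    { exists n1. split. lia. auto. }
    assert (Hu0' : u n0 <= x).
    { destruct (Rle_dec (u n0) x); auto. exfalso. apply Hc. apply Rabs_def1; lra. }
    assert (Hu1' : x < u (n0 + (n1 - n0))%nat).
    { replace (n0 + (n1 - n0))%nat with n1 by lia.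
      destruct (Rlt_dec x (u n1)); auto. exfalso. apply Hc'. apply Rabs_def1; lra. }
    destruct (crossing u x n0 Hu0' _ Hu1') as [n [Hn [Ha Hb']]].
    exists n. split. lia.
    specialize (HN1 n ltac:(lia)). fold (u n) in HN1. fold (u (S n)) in HN1.
    apply Rabs_def2 in HN1. apply Rabs_def1; lra.
Qed.
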